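(* Let $l$ be a nonzero natural number. Define $(a_n)_{n\ge 0}$ by $a_0=0$, $a_1=1$, $a_n=l\,a_{n-1}+a_{n-2}$ ($n\ge2$), $(b_n)_{n\ge 0}$ by $b_0=2$, $b_1=l$, $b_n=l\,b_{n-1}+b_{n-2}$ ($n\ge 2$), and let $(f_n)_{n\ge0}$ be the Fibonacci sequence ($f_0=0$, $f_1=1$, $f_n=f_{n-1}+f_{n-2}$). Then for every positive integer $n$: (i) $\mathbb{H}_{\mathbb{Q}}(-1,f_{2n+1})$ splits; (ii) $\mathbb{H}_{\mathbb{Q}}(-1,5f_{2n+1})$ splits; (iii) $\mathbb{H}_{\mathbb{Q}}(-1,a_{2n+1})$ splits; (iv) $\mathbb{H}_{\mathbb{Q}}(-1,(l^2+4)a_{2n+1})$ splits; (v) $\mathbb{H}_{\mathbb{Q}}(-1,f_{2n+1}f_{2n-1})$ splits; (vi) $\mathbb{H}_{\mathbb{Q}}(-1,a_{2n+1}a_{2n-1})$ splits; (vii) $\mathbb{H}_{\mathbb{Q}}(-1,-b_{n+1}b_{n-1})$ is a division algebra; (viii) $\mathbb{H}_{\mathbb{Q}}(1,b_{n+1}b_{n-1})$ splits; (ix) if $l$ is odd and $n\equiv 0\pmod 6$, then $\mathbb{H}_{\mathbb{Q}}(-1,b_{n+1}b_{n-1})$ is a division algebra; (x) if $6\nmid n$ and every prime $p\equiv 3\pmod 4$ dividing $b_{n+1}b_{n-1}$ divides it to an even exponent, then $\mathbb{H}_{\mathbb{Q}}(-1,b_{n+1}b_{n-1})$ splits; (xi)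 if $n\equiv 7\pmod{16}$, then $\mathbb{H}_{\mathbb{Q}}(-9,f_n)$ splits.
   Context: For nonzero rationals $\alpha,\beta$, the generalized quaternion algebra $\mathbb{H}_{\mathbb{Q}}(\alpha,\beta)$ is the $4$-dimensional $\mathbb{Q}$-algebra with basis $1,e_2,e_3,e_4$ and multiplication $e_2^2=\alpha$, $e_3^2=\beta$, $e_2e_3=-e_3e_2=e_4$ (so $e_4^2=-\alpha\beta$, $e_2e_4=\alpha e_3$, $e_3e_4=-\beta e_2$, etc.). It ''splits'' if it is isomorphic to the matrix algebra $M_2(\mathbb{Q})$, and it is a division algebra if every nonzero element is invertible (equivalently the norm $x_1^2-\alpha x_2^2-\beta x_3^2+\alpha\beta x_4^2$ vanishes only at $0$). *)

(* Defs.v *)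
From HB Require Import structures.
From mathcomp Require Import all_boot all_order all_algebra.
Set Implicit Arguments. Unset Strict Implicit. Unset Printing Implicit Defensive.
Import Order.TTheory GRing.Theory Num.Theory.
Local Open Scope ring_scope.

(* Generalized quaternion algebra H_Q(alpha,beta): elements are coordinate
   4-tuples (x1,x2,x3,x4) standing for x1 + x2 e2 + x3 e3 + x4 e4. *)
Definition quat := (rat * rat * rat * rat)%type.

Definition qone : quat := (1, 0, 0, 0).
Definition qzero : quat := (0, 0, 0, 0).

Definition qadd (x y : quat) : quat :=
  let: (x1, x2, x3, x4) := x in let: (y1, y2, y3, y4) := y in
  (x1 + y1, x2 + y2, x3 + y3, x4 + y4).

Definition qscale (c : rat) (x : quat) : quat :=
  let: (x1, x2, x3, x4) := x in (c * x1, c * x2, c * x3, c * x4).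

(* multiplication with e2^2 = alpha, e3^2 = beta, e2 e3 = - e3 e2 = e4 *)
Definition qmul (alpha beta : rat) (x y : quat) : quat :=
  let: (x1, x2, x3, x4) := x in let: (y1, y2, y3, y4) := y in
  ( x1 * y1 + alpha * x2 * y2 + beta * x3 * y3 - alpha * beta * x4 * y4,
    x1 * y2 + x2 * y1 - beta * x3 * y4 + beta * x4 * y3,
    x1 * y3 + x3 * y1 + alpha * x2 * y4 - alpha * x4 * y2,
    x1 * y4 + x4 * y1 + x2 * y3 - x3 * y2 ).

Definition quat_splits (alpha beta : rat) : Prop :=
  exists f : quat -> 'M[rat]_2,
    bijective f /\
    (forall (c : rat) (x y : quat), f (qadd (qscale c x) y) = c *: f x + f y) /\
    (forall x y : quat, f (qmul alpha beta x y) = f x *m f y) /\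
    f qone = 1%:M.

Definition quat_division (alpha beta : rat) : Prop :=
  forall x : quat, x <> qzero ->
    exists y : quat, qmul alpha beta x y = qone /\ qmul alpha beta y x = qone.

Fixpoint seq_a (l n : nat) : nat :=
  match n with
  | 0 => 0
  | 1 => 1
  | (m.+1 as k).+1 => l * seq_a l k + seq_a l m
  end.

Fixpoint seq_b (l n : nat) : nat :=
  match n with
  | 0 => 2
  | 1 => l
  | (m.+1 as k).+1 => l * seq_b l k + seq_b l m
  end.

Fixpoint fib (n : nat) : nat :=
  match n with
  | 0 => 0
  | 1 => 1
  | (m.+1 as k).+1 => fib k + fib m
  end.

(* Main.v *)
Require Import Defs.
From HB Require Import structures.
From mathcomp Require Import all_boot all_order all_algebra.
Import Order.TTheory GRing.Theory Num.Theory.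
Local Open Scope ring_scope.
From mathcomp Require Import all_field.
From mathcomp Require Import ring lra zify.

Local Open Scope ring_scope.


Definition mk2 (a b c d : rat) : 'M[rat]_2 :=
  \matrix_(i < 2, j < 2) if (i : nat) == 0%N then (if (j : nat) == 0%N then a else b)
                         else (if (j : nat) == 0%N then c else d).

Lemma mk2_mul a b c d a' b' c' d' :
  mk2 a b c d *m mk2 a' b' c' d' =
  mk2 (a*a'+b*c') (a*b'+b*d') (c*a'+d*c') (c*b'+d*d').
Proof.
apply/matrixP => i j; rewrite !mxE big_ord_recl big_ord1 !mxE /=.
by case: i => [[|[|]]] //= _; case: j => [[|[|]]].
Qed.

Lemma mk2_addZ (k : rat) a b c d a' b' c' d' :
  k *: mk2 a b c d + mk2 a' b' c' d' =
  mk2 (k*a+a') (k*b+b') (k*c+c') (k*d+d').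
Proof.
apply/matrixP => i j; rewrite !mxE.
by case: i => [[|[|]]] //= _; case: j => [[|[|]]].
Qed.

Lemma mk2_1 : (1%:M : 'M[rat]_2) = mk2 1 0 0 1.
Proof.
apply/matrixP => i j; rewrite !mxE.
by case: i => [[|[|]]] //= Hi; case: j => [[|[|]]].
Qed.

Lemma mk2_eta (M : 'M[rat]_2) : M = mk2 (M 0 0) (M 0 1) (M 1 0) (M 1 1).
Proof.
apply/matrixP => i j; rewrite !mxE.
case: i => [[|[|]]] //= Hi; case: j => [[|[|]]] //= Hj; congr (M _ _); exact: val_inj.
Qed.

Lemma mk2E a b c d : (mk2 a b c d 0 0 = a) * (mk2 a b c d 0 1 = b) *
   (mk2 a b c d 1 0 = c) * (mk2 a b c d 1 1 = d).
Proof. by rewrite !mxE. Qed.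

Lemma splits_gen (alpha beta u v : rat) :
  alpha != 0 -> beta = u ^+ 2 - alpha * v ^+ 2 -> beta != 0 -> quat_splits alpha beta.
Proof.
move=> ha hb hb0.
pose f (x : quat) := let: (x1, x2, x3, x4) := x in
  mk2 (x1 + u * x3 + alpha * v * x4) (alpha * x2 - alpha * v * x3 - alpha * u * x4)
      (x2 + v * x3 + u * x4) (x1 - u * x3 - alpha * v * x4).
pose g (M : 'M[rat]_2) : quat :=
  let P := (M 0 0 - M 1 1) / 2 in let Q := (M 1 0 - M 0 1 / alpha) / 2 in
  ((M 0 0 + M 1 1) / 2, (M 0 1 / alpha + M 1 0) / 2,
   (u * P - alpha * v * Q) / beta, (u * Q - v * P) / beta).
exists f; split; [|split; [|split]].
- exists g.
  + case=> [[[x1 x2] x3] x4]; rewrite /f /g !mk2E.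
    rewrite hb in hb0 *.
    congr (_, _, _, _); field; by rewrite ?hb0 ?ha.
  + move=> M; rewrite [RHS]mk2_eta /f /g; congr mk2; rewrite hb in hb0 *; field; by rewrite ?hb0 ?ha.
- move=> k [[[x1 x2] x3] x4] [[[y1 y2] y3] y4]; rewrite /= mk2_addZ; congr mk2; ring.
- move=> [[[x1 x2] x3] x4] [[[y1 y2] y3] y4]; rewrite /= mk2_mul; congr mk2; rewrite hb; ring.
- by rewrite /f /= mk2_1; congr mk2; ring.
Qed.



Lemma division_gen (alpha beta : rat) :
  (forall x1 x2 x3 x4 : rat,
     x1 ^+ 2 - alpha * x2 ^+ 2 - beta * x3 ^+ 2 + alpha * beta * x4 ^+ 2 = 0 ->
     (x1, x2, x3, x4) = qzero) -> quat_division alpha beta.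
Proof.
move=> H [[[x1 x2] x3] x4] hx.
set N := x1 ^+ 2 - alpha * x2 ^+ 2 - beta * x3 ^+ 2 + alpha * beta * x4 ^+ 2.
have hN : N != 0 by apply/eqP => /H.
exists (x1 / N, - x2 / N, - x3 / N, - x4 / N); split; rewrite /= /qone;
  congr (_, _, _, _); rewrite /N in hN *; field; exact hN.
Qed.

Lemma pos_def (B : rat) : 0 < B -> forall x1 x2 x3 x4 : rat,
     x1 ^+ 2 - (-1) * x2 ^+ 2 - (- B) * x3 ^+ 2 + (-1) * (- B) * x4 ^+ 2 = 0 ->
     (x1, x2, x3, x4) = qzero.
Proof.
move=> hB x1 x2 x3 x4 h.
have h1 : x1 ^+ 2 + x2 ^+ 2 + B * (x3 ^+ 2 + x4 ^+ 2) = 0 by rewrite -h; ring.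
have s1 := sqr_ge0 x1; have s2 := sqr_ge0 x2; have s3 := sqr_ge0 x3; have s4 := sqr_ge0 x4.
have e1 : x1 ^+ 2 = 0 by nra.
have e2 : x2 ^+ 2 = 0 by nra.
have e3 : x3 ^+ 2 = 0 by nra.
have e4 : x4 ^+ 2 = 0 by nra.
by move: e1 e2 e3 e4 => /eqP; rewrite expf_eq0 /= => /eqP-> /eqP; rewrite expf_eq0 /= => /eqP-> /eqP; rewrite expf_eq0 /= => /eqP-> /eqP; rewrite expf_eq0 /= => /eqP->.
Qed.

Local Open Scope nat_scope.

Lemma a_add l m n : seq_a l (m + n).+1 = seq_a l m.+1 * seq_a l n.+1 + seq_a l m * seq_a l n.
Proof.
suff H : forall m, (forall n, seq_a l (m + n).+1 = seq_a l m.+1 * seq_a l n.+1 + seq_a l m * seq_a l n)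
   /\ (forall n, seq_a l (m.+1 + n).+1 = seq_a l m.+2 * seq_a l n.+1 + seq_a l m.+1 * seq_a l n).
  by case: (H m).
clear m n; elim=> [|k [IH1 IH2]].
  split=> n.
    by rewrite add0n [seq_a l 1]/= [seq_a l 0]/= mul1n mul0n addn0.
  have -> : seq_a l 2 = l by rewrite /= muln1 addn0.
  by rewrite [seq_a l 1]/= mul1n.
split=> // n.
have -> : (k.+2 + n).+1 = (k + n).+3 by rewrite !addSn.
have -> : seq_a l (k + n).+3 = l * seq_a l (k+n).+2 + seq_a l (k + n).+1 by [].
have -> : (k + n).+2 = (k.+1 + n).+1 by rewrite addSn.
rewrite IH2 IH1.
have -> : seq_a l k.+3 = l * seq_a l k.+2 + seq_a l k.+1 by [].
have -> : seq_a l k.+2 = l * seq_a l k.+1 + seq_a l k by [].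
ring.
Qed.

Lemma a_odd l n : seq_a l n.*2.+1 = seq_a l n ^ 2 + seq_a l n.+1 ^ 2.
Proof. by rewrite -addnn a_add addnC. Qed.

Lemma fib_a n : fib n = seq_a 1 n.
Proof.
suff H : forall n, fib n = seq_a 1 n /\ fib n.+1 = seq_a 1 n.+1 by case: (H n).
clear n; elim=> [|k [IH1 IH2]] //; split => //.
have -> : fib k.+2 = fib k.+1 + fib k by [].
have -> : seq_a 1 k.+2 = 1 * seq_a 1 k.+1 + seq_a 1 k by [].
by rewrite IH1 IH2 mul1n.
Qed.

Lemma a_pos l n : 0 < l -> 0 < seq_a l n.+1.
Proof.
move=> hl.
suff H : forall n, 0 < seq_a l n.+1 /\ 0 < seq_a l n.+2 by case: (H n).
clear n; elim=> [|k [IH1 IH2]]; first by split => //=; lia.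
split => //. have -> : seq_a l k.+3 = l * seq_a l k.+2 + seq_a l k.+1 by [].
by rewrite addn_gt0 IH1 orbT.
Qed.

Lemma b_pos l n : 0 < l -> 0 < seq_b l n.
Proof.
move=> hl.
suff H : forall n, 0 < seq_b l n /\ 0 < seq_b l n.+1 by case: (H n).
clear n; elim=> [|k [IH1 IH2]]; first by split => //=.
split => //. have -> : seq_b l k.+2 = l * seq_b l k.+1 + seq_b l k by [].
by rewrite addn_gt0 IH1 orbT.
Qed.

Lemma b_cassini l n : ((seq_b l n.+2 * seq_b l n)%:Z - (seq_b l n.+1 * seq_b l n.+1)%:Z = (-1) ^+ n * (l * l + 4)%:Z)%R.
Proof.
elim: n => [|k IH].
  by rewrite /= expr0 mul1r; ring.
have e3 : seq_b l k.+3 = l * seq_b l k.+2 + seq_b l k.+1 by [].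
have e2 : seq_b l k.+2 = l * seq_b l k.+1 + seq_b l k by [].
rewrite e3 exprS -mulrA -IH e2.
move: (seq_b l k.+1) (seq_b l k) => x y.
ring.
Qed.

Lemma b_odd3 l k : odd l -> odd (seq_b l k.+3) = odd (seq_b l k).
Proof.
move=> hl.
have e3 : seq_b l k.+3 = l * seq_b l k.+2 + seq_b l k.+1 by [].
have e2 : seq_b l k.+2 = l * seq_b l k.+1 + seq_b l k by [].
rewrite e3 e2 !oddD !oddM hl !andTb.
rewrite oddD oddM hl andTb.
by case: (odd (seq_b l k.+1)); case: (odd (seq_b l k)).
Qed.

Lemma b_even l k : odd l -> ~~ odd (seq_b l (3 * k)).
Proof.
move=> hl; elim: k => [|k IH]; first by rewrite muln0.
by rewrite mulnS addnC addn3 b_odd3.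
Qed.

Lemma B_mod4 l n : odd l -> 0 < n -> 6 %| n -> (seq_b l n.+1 * seq_b l n.-1) %% 4 = 3.
Proof.
move=> hl hn h6.
case: n hn h6 => [//|m] _ h6.
change ((seq_b l m.+2 * seq_b l m) %% 4 = 3).
have hm : odd m.
  have : 2 %| m.+1 by apply: dvdn_trans h6.
  by rewrite dvdn2 /=; case: (odd m).
have hc := b_cassini l m.
rewrite -signr_odd hm expr1 mulN1r in hc.
have h3 : 3 %| m.+1 by apply: dvdn_trans h6.
have hb : ~~ odd (seq_b l m.+1).
  by move: h3 => /dvdnP [k ->]; rewrite mulnC b_even.
have Hb := odd_double_half (seq_b l m.+1).
have Hl := odd_double_half l.
rewrite (negbTE hb) add0n in Hb.
rewrite hl in Hl.
set c := (seq_b l m.+1)./2 in Hb.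
set d := l./2 in Hl.
have E : (seq_b l m.+2 * seq_b l m + (l * l + 4) = seq_b l m.+1 * seq_b l m.+1)%N.
  move: hc.
  move: (seq_b l m.+2 * seq_b l m)%N (seq_b l m.+1 * seq_b l m.+1)%N (l * l + 4)%N => X Y Z.
  lia.
move: E; rewrite -Hb.
move: (seq_b l m.+2 * seq_b l m)%N => BB.
rewrite -Hl.
have -> : ((c.*2 * c.*2) = 4 * (c * c))%N by rewrite -!muln2; ring.
have -> : ((1 + d.*2) * (1 + d.*2) = 4 * (d * d + d) + 1)%N by rewrite -!muln2; ring.
move: (c * c)%N (d * d + d)%N => X Y.
lia.
Qed.

Local Open Scope nat_scope.

Definition chk8 := all (fun x => all (fun y => all (fun z => all (fun w => all (fun r =>
  ((x^2+y^2) %% 8 == (r*(z^2+w^2)) %% 8) ==> [&& ~~ odd x, ~~ odd y, ~~ odd z & ~~ odd w])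
  [:: 3; 7]) (iota 0 8)) (iota 0 8)) (iota 0 8)) (iota 0 8).

Lemma chk8P : chk8. Proof. by vm_compute. Qed.

Lemma all8 (p : pred nat) x : all p (iota 0 8) -> p (x %% 8).
Proof. by move=> /allP H; apply: H; rewrite mem_iota ltn_mod. Qed.

Lemma mod8_even B a b c d : B %% 4 = 3 -> a^2 + b^2 = B * (c^2 + d^2) ->
  [&& ~~ odd a, ~~ odd b, ~~ odd c & ~~ odd d].
Proof.
move=> hB E.
have hr : B %% 8 \in [:: 3; 7].
  have : (B %% 8) %% 4 = 3 by rewrite (modn_dvdm B (_ : 4 %| 8)).
  have : B %% 8 < 8 by rewrite ltn_mod.
  move: (B %% 8) => r; rewrite !inE; lia.
have ho : forall x, odd (x %% 8) = odd x.
  by move=> x; rewrite odd_mod.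
have := chk8P; rewrite /chk8.
move=> /(all8 _ a) /(all8 _ b) /(all8 _ c) /(all8 _ d).
move=> /allP /(_ _ hr) /implyP; rewrite !ho; apply.
apply/eqP.
have L : forall x y, ((x %% 8)^2 + (y %% 8)^2) %% 8 = (x^2 + y^2) %% 8.
  by move=> x y; rewrite -modnDm !modnXm modnDm.
rewrite L modnMml -modnMmr L modnMmr E.
done.
Qed.

Lemma even_half x : ~~ odd x -> x = (x./2).*2.
Proof. by move=> h; rewrite -{1}(odd_double_half x) (negbTE h). Qed.

Lemma descent B : B %% 4 = 3 -> forall a b c d, a^2 + b^2 = B * (c^2 + d^2) ->
  [/\ a = 0, b = 0, c = 0 & d = 0].
Proof.
move=> hB a b c d.
move: {2}(a + b + c + d) (leqnn (a + b + c + d)) => k.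
elim: k a b c d => [|k IH] a b c d hk E; first by split; lia.
have /and4P [ea eb ec ed] := mod8_even _ _ _ _ _ hB E.
rewrite (even_half _ ea) (even_half _ eb) (even_half _ ec) (even_half _ ed) in E hk *.
move: (a./2) (b./2) (c./2) (d./2) E hk => a' b' c' d' E hk.
have E' : a'^2 + b'^2 = B * (c'^2 + d'^2).
  apply/eqP; rewrite -(eqn_pmul2l (_ : 0 < 4)) //; apply/eqP.
  move: E; rewrite -!muln2 !expnMn.
  move: (a'^2) (b'^2) (c'^2) (d'^2) => x y z w E.
  nia.
have hk' : a' + b' + c' + d' <= k by lia.
have [-> -> -> ->] := IH _ _ _ _ hk' E'.
by [].
Qed.

Local Open Scope ring_scope.

Lemma int_sq_nat (n : int) : (n%:~R : rat) ^+ 2 = ((absz n) ^ 2)%N%:R.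
Proof.
have h : n ^+ 2 = (`|n| ^ 2)%N :> int by rewrite -abszX gez0_abs // sqr_ge0.
by rewrite -rmorphXn /= h.
Qed.

Lemma aniso_rat (B : nat) : (B %% 4 = 3)%N -> forall x1 x2 x3 x4 : rat,
  x1 ^+ 2 - (-1) * x2 ^+ 2 - B%:R * x3 ^+ 2 + (-1) * B%:R * x4 ^+ 2 = 0 ->
  (x1, x2, x3, x4) = qzero.
Proof.
move=> hB x1 x2 x3 x4 E.
move: (numqE x1) (numqE x2) (numqE x3) (numqE x4) (denq_neq0 x1) (denq_neq0 x2) (denq_neq0 x3) (denq_neq0 x4).
move: (denq x1) (denq x2) (denq x3) (denq x4) => d1 d2 d3 d4 q1 q2 q3 q4 h1 h2 h3 h4.
pose D : int := d1 * d2 * d3 * d4.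
have hD : (D%:~R : rat) != 0.
  by rewrite intr_eq0 /D !mulf_neq0.
have e1 : x1 * D%:~R = (numq x1 * (d2 * d3 * d4))%:~R.
  by rewrite /D !intrM q1; ring.
have e2 : x2 * D%:~R = (numq x2 * (d1 * d3 * d4))%:~R.
  by rewrite /D !intrM q2; ring.
have e3 : x3 * D%:~R = (numq x3 * (d1 * d2 * d4))%:~R.
  by rewrite /D !intrM q3; ring.
have e4 : x4 * D%:~R = (numq x4 * (d1 * d2 * d3))%:~R.
  by rewrite /D !intrM q4; ring.
move: e1 e2 e3 e4.
move: (numq x1 * _) (numq x2 * _) (numq x3 * _) (numq x4 * _) => n1 n2 n3 n4 e1 e2 e3 e4.
have E2 : (n1%:~R : rat) ^+ 2 + n2%:~R ^+ 2 = B%:R * (n3%:~R ^+ 2 + n4%:~R ^+ 2).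
  rewrite -e1 -e2 -e3 -e4; apply/eqP; rewrite -subr_eq0; apply/eqP.
  have -> : (x1 * D%:~R) ^+ 2 + (x2 * D%:~R) ^+ 2 -
      B%:R * ((x3 * D%:~R) ^+ 2 + (x4 * D%:~R) ^+ 2) =
      (D%:~R) ^+ 2 * (x1 ^+ 2 - (-1) * x2 ^+ 2 - B%:R * x3 ^+ 2 + (-1) * B%:R * x4 ^+ 2)
    by ring.
  by rewrite E mulr0.
rewrite !int_sq_nat -!natrD -natrM in E2.
move/eqP: E2; rewrite eqr_nat => /eqP /(descent _ hB) [k1 k2 k3 k4].
have z : forall (x : rat) (n : int), x * D%:~R = n%:~R -> absz n = 0%N -> x = 0.
  move=> x n e /eqP; rewrite absz_eq0 => /eqP hn.
  by move: e; rewrite hn mulr0z => /eqP; rewrite mulf_eq0 (negbTE hD) orbF => /eqP.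
by rewrite (z _ _ e1 k1) (z _ _ e2 k2) (z _ _ e3 k3) (z _ _ e4 k4).
Qed.

Local Open Scope nat_scope.

Lemma Fp_dvd p n : prime p -> (n%:R : 'F_p)%R = 0%R -> (p %| n)%N.
Proof.
move=> pp h; have := val_Fp_nat pp n; rewrite h /= => e.
by rewrite /dvdn -e.
Qed.

Lemma sqrtm1 p : prime p -> p %% 4 = 1 -> exists s : nat, (p %| s ^ 2 + 1)%N.
Proof.
move=> pp hp.
set k := p %/ 4.
have hpk : p = 4 * k + 1 by rewrite {1}(divn_eq p 4) hp mulnC.
have p1 := prime_gt1 pp.
have k1 : 0 < k by lia.
have [/existsP [a /andP [a0 ak]] | /existsPn H] := boolP [exists a : 'F_p, (a != 0)%R && (a ^+ (2 * k) != 1)%R]; last first.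
  exfalso.
  pose rs := enum (predC1 (0%R : 'F_p)).
  have : (size rs <= 2 * k)%N.
    apply: max_unity_roots; first lia.
      apply/allP => a; rewrite mem_enum inE => a0.
      by move: (H a); rewrite a0 /= negbK unity_rootE.
    by rewrite enum_uniq.
  rewrite /rs -cardE.
  rewrite cardC1 card_Fp //; lia.
have ha : (a ^+ (4 * k) = 1)%R.
  have e : (a * a ^+ (4 * k) = a)%R.
    have e0 : forall n, n = p -> (a ^+ n = a)%R by move=> n ->; rewrite -[RHS](expf_card a) card_Fp.
    by rewrite -exprS -addn1 e0.
  apply: (mulfI a0); by rewrite e mulr1.
have hb : ((a ^+ k) ^+ 2 = -1)%R.
  have : ((a ^+ (2 * k)) ^+ 2 == 1)%R by rewrite -exprM (_ : (2 * k * 2 = 4 * k)%N) ?ha //; lia.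
  rewrite sqrf_eq1 (negbTE ak) /= => /eqP <-.
  by rewrite -!exprM mulnC.
exists (val (a ^+ k)%R).
apply: Fp_dvd => //.
rewrite natrD natrX natr_Zp hb; ring.
Qed.

Lemma dvd_Fp p n : prime p -> (p %| n)%N -> (n%:R : 'F_p)%R = 0%R.
Proof.
move=> pp h; apply: val_inj; rewrite /= val_Fp_nat //.
by move/eqP: h => ->.
Qed.

Lemma distF p (u u' : nat) : prime p ->
  (((`|(u%:Z - u'%:Z)%R| ^ 2)%N%:R : 'F_p) = (u%:R - u'%:R) ^+ 2)%R.
Proof.
move=> pp.
have := sqrn_dist u u'.
move=> /(congr1 (fun n => (n%:R : 'F_p)%R)).
rewrite natrD => e.
rewrite -[LHS](addrK ((2 * (u * u'))%N%:R)%R) e.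
rewrite !natrD !natrM; ring.
Qed.

Lemma thue p s : prime p -> (p %| s ^ 2 + 1)%N -> exists x y, p = x ^ 2 + y ^ 2.
Proof.
move=> pp hs.
have p1 := prime_gt1 pp.
have exP : exists j, p < j.+1 ^ 2 by exists p; nia.
case: (ex_minnP exP) => m hm hmin.
have hle : m ^ 2 <= p.
  case: m hm hmin => [|j] hm hmin; first by rewrite expnS mul0n.
  by case: (leqP (j.+1 ^ 2) p) => // h; have := hmin j h; lia.
have hne : m ^ 2 != p.
  apply/eqP => e.
  have hd : m %| p by rewrite -e expnS dvdn_mulr.
  case/primeP: pp => _ /(_ m hd) /orP [] /eqP hm1; move: e; rewrite hm1; nia.
have hlt : m ^ 2 < p by rewrite ltn_neqAle hne hle.
have s2 : ((s%:R : 'F_p) ^+ 2 = -1)%R.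
  have := dvd_Fp _ _ pp hs; rewrite natrD natrX => e.
  by rewrite -[LHS](addrK 1%R) e sub0r.
pose f (uv : 'I_m.+1 * 'I_m.+1) : 'F_p := ((uv.1 : nat)%:R + s%:R * (uv.2 : nat)%:R)%R.
have : ~~ injectiveb f.
  apply/negP => /injectiveP /leq_card; rewrite card_prod !card_ord Fp_cast //.
  move: hm; rewrite expnS expn1; lia.
move/injectivePn => [[u v] [[u' v'] neq eq]].
rewrite /f /= in eq.
set du := `|(u%:Z - u'%:Z)%R|.
set dv := `|(v%:Z - v'%:Z)%R|.
have hdiv : p %| du ^ 2 + dv ^ 2.
  apply: (Fp_dvd _ _ pp).
  rewrite natrD distF // distF //.
  set U := (u%:R : 'F_p)%R in eq *; set U' := (u'%:R : 'F_p)%R in eq *.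
  set V := (v%:R : 'F_p)%R in eq *; set V' := (v'%:R : 'F_p)%R in eq *.
  set S := (s%:R : 'F_p)%R in eq s2 *.
  have eU : U = (U' + S * V' - S * V)%R by rewrite -eq addrK.
  rewrite eU.
  have -> : ((U' + S * V' - S * V - U') ^+ 2 + (V - V') ^+ 2 = (S ^+ 2 + 1) * (V' - V) ^+ 2)%R by ring.
  by rewrite s2 addNr mul0r.
have hdu : du <= m.
  rewrite /du; case: (leqP u' u) => h; [rewrite distnEl | rewrite distnEr]; 
    have := ltn_ord u; have := ltn_ord u'; lia.
have hdv : dv <= m.
  rewrite /dv; case: (leqP v' v) => h; [rewrite distnEl | rewrite distnEr]; 
    have := ltn_ord v; have := ltn_ord v'; lia.
have hpos : 0 < du ^ 2 + dv ^ 2.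
  move: neq; rewrite xpair_eqE negb_and => /orP [] h.
    by rewrite addn_gt0 expn_gt0 /du absz_gt0 subr_eq0 eqz_nat h.
  by rewrite addn_gt0 orbC expn_gt0 /dv absz_gt0 subr_eq0 eqz_nat h.
have hN : du ^ 2 + dv ^ 2 < 2 * p.
  have : du ^ 2 <= m ^ 2 by rewrite leq_exp2r.
  have : dv ^ 2 <= m ^ 2 by rewrite leq_exp2r.
  lia.
exists du, dv.
move: hdiv => /dvdnP [q hq].
move: hN hpos; rewrite hq.
case: q {hq} => [|[|q]]; lia.
Qed.

Definition s2 n := exists x y, n = x ^ 2 + y ^ 2.

Lemma s2_mul a b : s2 a -> s2 b -> s2 (a * b).
Proof.
move=> [x [y ->]] [z [w ->]].
exists (x * z + y * w), `|((x * w)%:Z - (y * z)%:Z)%R|.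
have := sqrn_dist (x * w) (y * z).
move: `|_| => t e.
nia.
Qed.

Definition Hcond B := forall p, prime p -> p %% 4 = 3 -> p %| B -> ~~ odd (logn p B).

Lemma Hcond_div d C : 0 < d -> 0 < C ->
  (forall q, prime q -> q %% 4 = 3 -> ~~ odd (logn q d)) -> Hcond (d * C) -> Hcond C.
Proof.
move=> hd hC hq H q pq q3 qC.
have := H q pq q3 (dvdn_mull d qC).
by rewrite lognM // oddD (negbTE (hq q pq q3)).
Qed.

Lemma two_sq B : 0 < B -> Hcond B -> s2 B.
Proof.
elim/ltn_ind: B => B IH hB H.
case: (ltngtP B 1) => [|hB1|->]; first lia; last by exists 1, 0.
have pp := pdiv_prime hB1.
have pB := pdiv_dvd B.
move: (pdiv B) pp pB => p pp pB.
have p1 := prime_gt1 pp.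
have [C eC] : exists C, B = p * C by move/dvdnP: pB => [C ->]; exists C; rewrite mulnC.
have C0 : 0 < C by move: hB; rewrite eC muln_gt0 => /andP [].
have hp4 : p %% 4 < 4 by rewrite ltn_mod.
case: (ltngtP (p %% 4) 3) => h3.
-
  have sp : s2 p.
    have : p %% 4 = 1 \/ p = 2.
      have : p %% 4 = 0 \/ p %% 4 = 1 \/ p %% 4 = 2 by lia.
      case=> [h|[h|h]]; [|by left|right].
      + have : 2 %| p by rewrite /dvdn -(modn_dvdm p (_ : 2 %| 4)) // h.
        rewrite dvdn_prime2 // => /eqP e; by rewrite -e in h.
      + have : 2 %| p by rewrite /dvdn -(modn_dvdm p (_ : 2 %| 4)) // h.
        by rewrite dvdn_prime2 // => /eqP.
    case=> [h|->]; last by exists 1, 1.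
    have [s hs] := sqrtm1 p pp h.
    exact: thue pp hs.
  rewrite eC; apply: s2_mul => //.
  apply: IH; [by rewrite eC -{1}[C]mul1n ltn_pmul2r | done |].
  apply: (Hcond_div p) => //; first lia; last by rewrite -eC.
  move=> q pq q3; rewrite logn_prime //.
  by case: eqP => // e; move: h3; rewrite -e q3.
- lia.
-
  have hl := H p pp h3 pB.
  have l1 : 0 < logn p B by rewrite logn_gt0 mem_primes pp hB pB.
  have l2 : 2 <= logn p B.
    by move: hl l1; case: (logn p B) => [|[|n]].
  have : p ^ 2 %| B by rewrite pfactor_dvdn.
  move/dvdnP => [D eD].
  have D0 : 0 < D by move: hB; rewrite eD muln_gt0 => /andP [].
  rewrite eD mulnC; apply: s2_mul; first by exists p, 0; rewrite (exp0n (isT : 0 < 2)) addn0.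
  have pp2 : 1 < p ^ 2.
    by rewrite expnS expn1; apply: (leq_trans p1); rewrite leq_pmulr // ltnW.
  apply: IH; [by rewrite eD -{1}[D]muln1 ltn_pmul2l | done |].
  apply: (Hcond_div (p ^ 2)) => //; first by rewrite expn_gt0; lia.
    by move=> q pq q3; rewrite lognX oddM.
  by rewrite mulnC -eD.
Qed.

Local Open Scope ring_scope.

Lemma split_s2 (beta : nat) : s2 beta -> (0 < beta)%N -> quat_splits (-1) beta%:R.
Proof.
move=> [x [y e]] hb.
apply: (splits_gen _ _ x%:R y%:R).
  by rewrite oppr_eq0 oner_eq0.
  by rewrite e natrD !natrX; ring.
by rewrite pnatr_eq0 -lt0n.
Qed.

Lemma s2_a l n : s2 (seq_a l n.*2.+1).
Proof. by exists (seq_a l n), (seq_a l n.+1); rewrite a_odd. Qed.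

Lemma s2_fib n : s2 (fib n.*2.+1).
Proof. by rewrite fib_a; apply: s2_a. Qed.

Lemma fib_pos n : (0 < fib n.+1)%N.
Proof. by rewrite fib_a a_pos. Qed.

Lemma dbl_pred m : (0 < m)%N -> m.*2.-1 = (m.-1).*2.+1.
Proof. by case: m => // m _; rewrite doubleS. Qed.

Theorem proposition3p4 (l n : nat) (hl : (0 < l)%N) (hn : (0 < n)%N) :
  let a := seq_a l in
  let b := seq_b l in
  let B := (b n.+1 * b n.-1)%N in
  (quat_splits (-1) (fib n.*2.+1)%:R) /\
  (quat_splits (-1) (5 * fib n.*2.+1)%:R) /\
  (quat_splits (-1) (a n.*2.+1)%:R) /\
  (quat_splits (-1) ((l ^ 2 + 4) * a n.*2.+1)%:R) /\
  (quat_splits (-1) (fib n.*2.+1 * fib n.*2.-1)%:R) /\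
  (quat_splits (-1) (a n.*2.+1 * a n.*2.-1)%:R) /\
  (quat_division (-1) (- (B%:R))) /\
  (quat_splits 1 B%:R) /\
  (odd l -> (6 %| n)%N -> quat_division (-1) B%:R) /\
  (~~ (6 %| n)%N ->
     (forall p : nat, prime p -> (p %% 4 = 3)%N -> (p %| B)%N ->
        ~~ odd (logn p B)) ->
     quat_splits (-1) B%:R) /\
  ((n %% 16 = 7)%N -> quat_splits (-9) (fib n)%:R).
Proof.
move=> a b B.
have hB : (0 < B)%N by rewrite /B muln_gt0 !b_pos.
have hnm : n.*2.-1 = (n.-1).*2.+1 by apply: dbl_pred.
have s5 : s2 5 by exists 1%N, 2%N.
have sl : s2 (l ^ 2 + 4) by exists l, 2%N.
split; [|split; [|split; [|split; [|split; [|split; [|split; [|split; [|split; [|split]]]]]]]]].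
- by apply: split_s2; [apply: s2_fib | apply: fib_pos].
- apply: split_s2; first by apply: s2_mul => //; apply: s2_fib.
  by rewrite muln_gt0 fib_pos.
- by apply: split_s2; [apply: s2_a | apply: a_pos].
- apply: split_s2; first by apply: s2_mul => //; apply: s2_a.
  by rewrite muln_gt0 a_pos // andbT addn_gt0 orbT.
- rewrite hnm; apply: split_s2; first by apply: s2_mul; apply: s2_fib.
  by rewrite muln_gt0 !fib_pos.
- rewrite /a hnm; apply: split_s2; first by apply: s2_mul; apply: s2_a.
  by rewrite muln_gt0 !a_pos.
- apply: division_gen; apply: pos_def.
  by rewrite ltr0n.
- apply: (splits_gen _ _ ((B%:R + 1) / 2) ((B%:R - 1) / 2)).
    by rewrite oner_eq0.
    by field.
  by rewrite pnatr_eq0 -lt0n.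
- move=> hodd h6; apply: division_gen; apply: aniso_rat.
  exact: B_mod4.
- move=> _ H; apply: split_s2 => //.
  exact: two_sq.
- move=> h16.
  have hodd : odd n.
    by rewrite -(odd_mod n (erefl : odd 16 = false)) h16.
  have := odd_double_half n; rewrite hodd => hn2.
  rewrite -hn2 add1n fib_a a_odd.
  apply: (splits_gen _ _ ((seq_a 1 n./2)%:R) ((seq_a 1 n./2.+1)%:R / 3)).
    by [].
    by rewrite natrD !natrX; field.
  by rewrite pnatr_eq0 -lt0n -a_odd a_pos.
Qed.
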